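(* Let ${\bf v}\in\mathcal V$. (a) If ${\bf v}$ has at most $\lfloor n/2\rfloor$ positive prizes (i.e. $v_r=0$ for all $r>\lfloor n/2\rfloor$), then $L({\bf v})\le 0$, so $M({\bf v},\theta)$ and the symmetric equilibrium effort $x^*({\bf v},\theta)$ are nonincreasing in $\theta\in[0,1]$ (effort decreases with loss aversion). (b) If ${\bf v}$ has at least $\lceil n/2\rceil$ equal prizes at the top (i.e. $v_1=v_2=\dots=v_{\lceil n/2\rceil}$), then $L({\bf v})\ge 0$, so $M({\bf v},\theta)$ and $x^*({\bf v},\theta)$ are nondecreasing in $\theta\in[0,1]$ (effort increases with loss aversion).
   Context: Fix an integer $n\ge 2$ and a noise distribution with cdf $F$ and density $f$ on $\mathbb R$ (integrals finite). For $r=1,\dots,n$ let $g_r(u)=u^{n-r}(1-u)^{r-1}$ and $\beta_r=\binom{n-1}{r-1}\int g_r'(F(t))f(t)^2dt$; $B_r=\sum_{k=1}^r\beta_k$. Let $\mathcal V=\{{\bf v}\in\mathbb R^n: v_1\ge\dots\ge v_n\ge 0,\ \sum_r v_r=1\}$, $R({\bf v})=\sum_r\beta_rv_r$, $L({\bf v})=-\frac1n\sum_{r=1}^n\sum_{s<r}(\beta_r+\beta_s)(v_s-v_r)$, $M({\bf v},\theta)=R({\bf v})+\theta L({\bf v})$ with loss-aversion parameter $\theta\in[0,1]$. The effort cost $c$ is strictly increasing, differentiable and strictly convex on $[0,\bar x]$, $\bar x=c^{-1}(1)$, with $c(0)=c'(0)=0$. The symmetric equilibrium effort $x^*({\bf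 v},\theta)$ is the effort solving the first-order condition $c'(x^* )=M({\bf v},\theta)$; since $c'$ is strictly increasing, $x^*$ is a strictly increasing function of $M({\bf v},\theta)$. *)

(* Defs.v *)
From HB Require Import structures.
From mathcomp Require Import all_boot all_order all_algebra.
From mathcomp Require Import all_classical all_reals all_analysis.
Set Implicit Arguments. Unset Strict Implicit. Unset Printing Implicit Defensive.
Import Order.TTheory GRing.Theory Num.Theory.
Import numFieldNormedType.Exports.
Local Open Scope classical_set_scope.
Local Open Scope ring_scope.

Section Defs.
Variable R : realType.

Definition gfun (n r : nat) (u : R) : R := u ^+ (n - r) * (1 - u) ^+ (r - 1).

Definition beta (n : nat) (F f : R -> R) (r : nat) : R :=
  ('C(n.-1, r.-1))%:R *
  Rintegral (@lebesgue_measure R) setT (fun t => derive1 (gfun n r) (F t) * f t ^+ 2).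

(* prize vectors v : indices 1..n (v r for r = 1..n) *)
Definition inV (n : nat) (v : nat -> R) : Prop :=
  (forall r, (1 <= r < n)%N -> v r.+1 <= v r) /\ 0 <= v n /\
  \sum_(1 <= r < n.+1) v r = 1.

Definition Rrev (n : nat) (b : nat -> R) (v : nat -> R) : R :=
  \sum_(1 <= r < n.+1) b r * v r.

Definition Lloss (n : nat) (b : nat -> R) (v : nat -> R) : R :=
  - (n%:R)^-1 * \sum_(1 <= r < n.+1) \sum_(1 <= s < r) (b r + b s) * (v s - v r).

Definition Mmarg (n : nat) (b : nat -> R) (v : nat -> R) (theta : R) : R :=
  Rrev n b v + theta * Lloss n b v.

Definition noise_ok (n : nat) (F f : R -> R) : Prop :=
  measurable_fun setT f /\ (forall t, 0 <= f t) /\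
  (@lebesgue_measure R).-integrable setT (fun t => (f t)%:E) /\
  Rintegral (@lebesgue_measure R) setT f = 1 /\
  (forall t, F t = Rintegral (@lebesgue_measure R) `]-oo, t] f) /\
  (forall r, (1 <= r <= n)%N ->
     (@lebesgue_measure R).-integrable setT
       (fun t => (derive1 (gfun n r) (F t) * f t ^+ 2)%:E)).

Definition cost_ok (c : R -> R) (xbar : R) : Prop :=
  0 < xbar /\ c 0 = 0 /\ c xbar = 1 /\
  (forall x, 0 <= x <= xbar -> derivable c x 1) /\
  derive1 c 0 = 0 /\
  (forall x y, 0 <= x <= xbar -> 0 <= y <= xbar -> x < y -> c x < c y) /\
  (forall x y t, 0 <= x <= xbar -> 0 <= y <= xbar -> x != y -> 0 < t < 1 ->
     c (t * x + (1 - t) * y) < t * c x + (1 - t) * c y).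

(* xs is a symmetric equilibrium effort profile in theta: first-order condition *)
Definition is_xstar (c : R -> R) (xbar : R) (M : R -> R) (xs : R -> R) : Prop :=
  forall theta, 0 <= theta <= 1 -> 0 <= xs theta <= xbar /\ derive1 c (xs theta) = M theta.

End Defs.

(* Main.v *)
Require Import Defs.
From HB Require Import structures.
From mathcomp Require Import all_boot all_order all_algebra.
From mathcomp Require Import all_classical all_reals all_analysis.
From mathcomp Require Import ring lra zify.
Import Order.TTheory GRing.Theory Num.Theory.
Local Open Scope ring_scope.
Local Open Scope classical_set_scope.
Section S.
Variable R : realType.
Lemma dgfun n k (u : R) : derive1 (gfun n k) u =
  (n-k)%:R * u^+(n-k).-1 * (1-u)^+(k-1) - (k-1)%:R * u^+(n-k) * (1-u)^+(k-1).-1.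
Proof.
have -> : gfun n k = (@id R) ^+ (n-k) * ((cst 1) - id) ^+ (k-1).
  by apply/funext => x; rewrite /gfun !fctE /=. 
rewrite derive1E derive_val /= !fctE.
rewrite /GRing.scale /= mulr1 sub0r mulrN1; ring.
Qed.

Definition bb (N : nat) (u : R) (j : nat) : R :=
  if j is i.+1 then 'C(N, i)%:R * u ^+ (N - i) * (1 - u) ^+ i else 0.

Lemma term N j u : 'C(N.+1, j)%:R * derive1 (gfun N.+2 j.+1) u =
  (N.+1)%:R * (bb N u j.+1 - bb N u j).
Proof.
rewrite dgfun /=; case: j => [|i].
  by rewrite !subSS !subn0 /= !bin0; ring.
rewrite !subSS !subn0 /= -subnS.
have e1 : ('C(N.+1, i.+1) * (N - i))%N = (N.+1 * 'C(N, i.+1))%N.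
  by rewrite mulnC (mul_bin_down N.+1 i.+1) subSS.
have e2 : ('C(N.+1, i.+1) * i.+1)%N = (N.+1 * 'C(N, i))%N.
  by rewrite mulnC -(mul_bin_diag N.+1 i).
transitivity (('C(N.+1, i.+1) * (N - i))%N%:R * (u ^+ (N - i.+1) * (1 - u) ^+ i.+1)
   - ('C(N.+1, i.+1) * i.+1)%N%:R * (u ^+ (N - i) * (1 - u) ^+ i)).
  by rewrite !natrM; ring.
rewrite e1 e2 !natrM; ring.
Qed.

Notation mu := (@lebesgue_measure R).
Lemma F01 (f : R -> R) t : (forall t, 0 <= f t) ->
  mu.-integrable setT (fun t => (f t)%:E) ->
  Rintegral mu setT f = 1 ->
  0 <= Rintegral mu `]-oo, t] f <= 1.
Proof.
move=> f0 fi f1; apply/andP; split; first by apply: Rintegral_ge0.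
have mA : measurable (`]-oo, t] : set R) by exact: measurable_itv.
have := @Rintegral_setU _ _ R mu _ (~` `]-oo, t]) f mA (measurableC mA).
rewrite setUv => /(_ fi) H; rewrite -f1 H; last by rewrite /disj_set setICr.
have : 0 <= Rintegral mu (~` `]-oo, t]) f by apply: Rintegral_ge0.
lra.
Qed.

Lemma integ_sum (h : nat -> R -> R) r :
  (forall j, (j < r)%N -> mu.-integrable setT (EFin \o h j)) ->
  mu.-integrable setT (EFin \o (fun t => \sum_(0 <= j < r) h j t)) /\
  \sum_(0 <= j < r) Rintegral mu setT (h j) = Rintegral mu setT (fun t => \sum_(0 <= j < r) h j t).
Proof.
elim: r => [|r IH] hi.
  have -> : (fun t => \sum_(0 <= j < 0) h j t) = cst 0.
    by apply/funext => t; rewrite big_geq.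
  rewrite big_geq //; split; last by rewrite Rintegral_cst // mul0r.
  by have -> : EFin \o cst (0:R) = cst 0%E by []; exact: integrable0.
have [IH1 IH2] := IH (fun j jr => hi j (ltnW jr)).
have hr := hi r (ltnSn r).
have E : (fun t => \sum_(0 <= j < r.+1) h j t) = (fun t => \sum_(0 <= j < r) h j t) \+ h r.
  by apply/funext => t; rewrite big_nat_recr.
rewrite E big_nat_recr //= IH2.
have E2 : EFin \o ((fun t => \sum_(0 <= j < r) h j t) \+ h r) =
  (EFin \o (fun t => \sum_(0 <= j < r) h j t)) \+ (EFin \o h r).
  by apply/funext => t.
rewrite E2; split; first exact: integrableD.
by rewrite -RintegralD.
Qed.
Lemma Bsum n F f r : (2 <= n)%N -> noise_ok n F f -> (r <= n)%N ->
  \sum_(1 <= k < r.+1) beta n F f k =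
  Rintegral mu setT (fun t => (n.-1)%:R * bb (n-2)%N (F t) r * f t ^+ 2).
Proof.
case: n => [|[|N]] // _ [_ [_ [_ [_ [_ hint]]]]] rn.
rewrite big_add1 /= !subSS subn0.
have hj : forall j, (j < r)%N -> mu.-integrable setT
    (EFin \o (fun t => 'C(N.+1, j)%:R * (derive1 (gfun N.+2 j.+1) (F t) * f t ^+ 2))).
  move=> j jr.
  have := integrableZl measurableT ('C(N.+1, j)%:R) (hint j.+1 _).
  rewrite ltnS; move/(_ (leq_trans jr rn)) => H.
  by apply: eq_integrable H => // t _ /=; rewrite EFinM.
transitivity (\sum_(0 <= j < r) Rintegral mu setT
    (fun t => 'C(N.+1, j)%:R * (derive1 (gfun N.+2 j.+1) (F t) * f t ^+ 2))).
  rewrite big_nat_cond [RHS]big_nat_cond; apply: eq_bigr => j /andP[/andP[_ jr] _].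
  rewrite /beta /= RintegralZl //.
  by apply: hint; rewrite ltnS (leq_trans jr rn).
rewrite (proj2 (integ_sum _ _ hj)).
apply: eq_Rintegral => t _.
under eq_bigr do rewrite mulrA.
rewrite -big_distrl /=.
under eq_bigr do rewrite term.
rewrite -big_distrr /= telescope_sumr //= subr0; ring.
Qed.
Lemma deriv_le_right (c : R -> R) x K e : derivable c x 1 -> 0 < e ->
  (forall h, 0 < h -> h <= e -> c (h + x) - c x <= h * K) -> derive1 c x <= K.
Proof.
move=> dc e0 hK.
rewrite derive1E /derive.
set g := (fun h : R => _).
have cv : g @ 0^' --> lim (g @ 0^') by exact: dc.
have cvr : g @ 0^'+ --> lim (g @ 0^').
  move=> A /cv /nbhs_ballP [_ /posnumP[e'] xe_A].
  by exists e'%:num => //= y xe_y /gt_eqF/negbT/xe_A; exact.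
apply: (cvgr_to_le cvr).
near=> h.
have h0 : 0 < h by near: h; exact: nbhs_right_gt.
have he : h <= e by near: h; exact: nbhs_right_le.
rewrite /g /= /GRing.scale /= mulr1.
have := hK h h0 he.
move=> H; rewrite -(ler_pM2l h0) mulrA mulfV ?gt_eqF // mul1r //.
Unshelve. all: by end_near.
Qed.

Lemma deriv_ge_left (c : R -> R) y K e : derivable c y 1 -> 0 < e ->
  (forall h, 0 < h -> h <= e -> h * K <= c y - c (y - h)) -> K <= derive1 c y.
Proof.
move=> dc e0 hK.
rewrite derive1E /derive.
set g := (fun h : R => _).
have cv : g @ 0^' --> lim (g @ 0^') by exact: dc.
have cvl : g @ 0^'- --> lim (g @ 0^').
  move=> A /cv /nbhs_ballP [_ /posnumP[e'] xe_A].
  by exists e'%:num => //= z xe_z /lt_eqF/negbT/xe_A; exact.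
apply: (cvgr_to_ge cvl).
near=> h.
have h0 : h < 0 by near: h; exact: nbhs_left_lt.
have he : - e <= h by near: h; apply: nbhs_left_ge; rewrite ltrNl oppr0.
rewrite /g /= /GRing.scale /= mulr1.
have := hK (- h) ltac:(by rewrite oppr_gt0) ltac:(by rewrite lerNl).
rewrite opprK => H.
rewrite -(ler_nM2l h0) mulrA mulfV ?lt_eqF // mul1r.
rewrite mulNr [y + h]addrC in H; lra.
Unshelve. all: by end_near.
Qed.

Lemma dc_strict (c : R -> R) xbar x y : cost_ok c xbar -> 0 <= x -> x < y -> y <= xbar ->
  derive1 c x < derive1 c y.
Proof.
case=> [xb0 [_ [_ [dc [_ [_ cv]]]]]] x0 xy yb.
set d := (y - x) / 2.
have d0 : 0 < d by rewrite /d divr_gt0 // subr_gt0.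
have dE : y - x = d + d by rewrite /d; field.
set m := x + d.
have mE : y = m + d by rewrite /m; lra.
have ix : 0 <= x <= xbar by apply/andP; split; lra.
have iy : 0 <= y <= xbar by apply/andP; split; lra.
have im : 0 <= m <= xbar by apply/andP; split; rewrite /m; lra.
have dn0 : d != 0 by rewrite gt_eqF.
have xm : x < m by rewrite /m; lra.
have my : m < y by lra.
set q := (c m - c x) / d.
set q' := (c y - c m) / d.
have qq : q < q'.
  have cm := cv x y (1/2) ix iy (negbT (lt_eqF xy)) ltac:(apply/andP; split; lra).
  have e : 1 / 2 * x + (1 - 1 / 2) * y = m by rewrite /m /d; field.
  rewrite e in cm.
  rewrite -subr_gt0 /q /q' -mulrBl; apply: divr_gt0 => //; lra.
apply: (@le_lt_trans _ _ q).
  apply: (@deriv_le_right _ _ _ d) => // [|h h0 hd].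
    exact: dc.
  have [hd'|hd'] := eqVneq h d.
    by rewrite hd' /q (addrC d x) -/m mulrC mulfVK.
  have hlt : h < d by rewrite lt_neqAle hd' hd.
  set t := 1 - h / d.
  have t0 : 0 < t < 1.
    apply/andP; split; rewrite /t.
      by rewrite subr_gt0 ltr_pdivrMr // mul1r.
    by rewrite ltrBlDr ltrDl divr_gt0.
  have H := cv x m t ix im (negbT (lt_eqF xm)) t0.
  have -> : h + x = t * x + (1 - t) * m by rewrite /t /m; field.
  have E : t * c x + (1 - t) * c m - c x = h * q by rewrite /t /q; field.
  apply: ltW; lra.
apply: (@lt_le_trans _ _ q') => //.
apply: (@deriv_ge_left _ _ _ d) => // [|h h0 hd].
  exact: dc.
have [hd'|hd'] := eqVneq h d.
  by rewrite hd' /q' mE addrK mulrC mulfVK.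
have hlt : h < d by rewrite lt_neqAle hd' hd.
set t := h / d.
have t0 : 0 < t < 1.
  apply/andP; split; rewrite /t.
    by rewrite divr_gt0.
  by rewrite ltr_pdivrMr // mul1r.
have H := cv m y t im iy (negbT (lt_eqF my)) t0.
have -> : y - h = t * m + (1 - t) * y by rewrite /t mE; field.
have E : c y - (t * c m + (1 - t) * c y) = h * q' by rewrite /t /q'; field.
apply: ltW; lra.
Qed.
Definition Bs (b : nat -> R) k := \sum_(1 <= i < k.+1) b i.

Lemma abel (w v : nat -> R) m :
  \sum_(1 <= s < m.+1) w s * (v s - v m.+1) =
  \sum_(1 <= k < m.+1) (v k - v k.+1) * Bs w k.
Proof.
elim: m => [|m IH]; first by rewrite !big_geq.
rewrite big_nat_recr //= [RHS]big_nat_recr //= -IH.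
have -> : \sum_(1 <= s < m.+1) w s * (v s - v m.+2) =
    \sum_(1 <= s < m.+1) w s * (v s - v m.+1) + Bs w m * (v m.+1 - v m.+2).
  rewrite /Bs big_distrl -big_split /=; apply: eq_bigr => i _; ring.
have -> : Bs w m.+1 = Bs w m + w m.+1 by rewrite /Bs big_nat_recr.
ring.
Qed.

Lemma Sform (b v : nat -> R) m :
  \sum_(1 <= r < m.+1) \sum_(1 <= s < r) (b r + b s) * (v s - v r) =
  \sum_(1 <= k < m.+1) (v k - v k.+1) * ((m%:R - 2 * k%:R) * Bs b k + k%:R * Bs b m).
Proof.
elim: m => [|m IH]; first by rewrite !big_geq.
rewrite big_nat_recr //= IH [in RHS]big_nat_recr //=.
have -> : Bs b m.+1 = Bs b m + b m.+1 by rewrite /Bs big_nat_recr.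
have inner : \sum_(1 <= s < m.+1) (b m.+1 + b s) * (v s - v m.+1) =
    \sum_(1 <= k < m.+1) (v k - v k.+1) * (b m.+1 * k%:R + Bs b k).
  transitivity (b m.+1 * \sum_(1 <= s < m.+1) ((fun=> 1) s * (v s - v m.+1)) +
      \sum_(1 <= s < m.+1) b s * (v s - v m.+1)).
    rewrite big_distrr -big_split /=; apply: eq_bigr => i _; ring.
  rewrite (abel (fun=> 1)) abel big_distrr -big_split /=.
  apply: eq_bigr => k _; rewrite /Bs sumr_const_nat subSS subn0; ring.
rewrite inner -big_split /=.
have -> : (v m.+1 - v m.+2) * ((m.+1%:R - 2 * m.+1%:R) * (Bs b m + b m.+1) +
      m.+1%:R * (Bs b m + b m.+1)) = 0 by ring.
rewrite addr0; apply: eq_bigr => k _.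
rewrite [m.+1%:R]mulrS; ring.
Qed.

Lemma Bn0 n F f : (2 <= n)%N -> noise_ok n F f -> Bs (beta n F f) n = 0.
Proof.
move=> n2 hn; rewrite /Bs (Bsum _ _ _ _ n2 hn (leqnn n)).
transitivity (Rintegral mu setT (fun _ => 0:R)); last first.
  by rewrite Rintegral_cst // mul0r.
apply: eq_Rintegral => t _.
case: n n2 {hn} => [|[|N]] // _.
rewrite /= !subSS subn0 bin_small //; ring.
Qed.

Lemma Bge n F f k : (2 <= n)%N -> noise_ok n F f -> (k <= n)%N -> 0 <= Bs (beta n F f) k.
Proof.
move=> n2 hn kn; rewrite /Bs (Bsum _ _ _ _ n2 hn kn).
apply: Rintegral_ge0 => t _.
have [_ [f0 [fi [f1 [FE _]]]]] := hn.
have /andP[u0 u1] : 0 <= F t <= 1 by rewrite FE; exact: F01.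
apply: mulr_ge0; last by rewrite exprn_even_ge0.
apply: mulr_ge0 => //.
case: k {kn} => [|i] //=.
apply: mulr_ge0; first apply: mulr_ge0 => //; apply: exprn_ge0 => //.
by rewrite subr_ge0.
Qed.
End S.
Local Close Scope classical_set_scope.
Arguments Bs {R}.
Arguments dc_strict {R}.

Theorem proposition1 (R : realType) (n : nat) (F f : R -> R) (c : R -> R) (xbar : R)
  (v : nat -> R) (xs : R -> R) :
  (2 <= n)%N -> noise_ok n F f -> cost_ok c xbar -> inV n v ->
  is_xstar c xbar (Mmarg n (beta n F f) v) xs ->
  ((forall r, (n./2 < r <= n)%N -> v r = 0) ->
     Lloss n (beta n F f) v <= 0 /\
     (forall th1 th2, 0 <= th1 -> th1 <= th2 -> th2 <= 1 ->
        Mmarg n (beta n F f) v th2 <= Mmarg n (beta n F f) v th1 /\ xs th2 <= xs th1)) /\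
  ((forall r, (1 <= r <= uphalf n)%N -> v r = v 1%N) ->
     0 <= Lloss n (beta n F f) v /\
     (forall th1 th2, 0 <= th1 -> th1 <= th2 -> th2 <= 1 ->
        Mmarg n (beta n F f) v th1 <= Mmarg n (beta n F f) v th2 /\ xs th1 <= xs th2)).
Proof.
move=> n2 hn hc hv hx.
set b := beta n F f.
have Bn : Bs b n = 0 by exact: Bn0.
have Bg : forall k, (k <= n)%N -> 0 <= Bs b k by move=> k kn; exact: Bge.
have [hvd [_ _]] := hv.
have Lform : Lloss n b v = - (n%:R)^-1 *
    \sum_(1 <= k < n.+1) (v k - v k.+1) * ((n%:R - 2 * k%:R) * Bs b k).
  rewrite /Lloss Sform Bn; congr (_ * _); apply: eq_bigr => k _; ring.
have hh := odd_double_half n.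
have hu := uphalf_half n.
have ho : (odd n <= 1)%N by case: (odd n).
have xsmono : forall th1 th2, 0 <= th1 -> th2 <= 1 -> 0 <= th2 -> th1 <= 1 ->
    Mmarg n b v th2 <= Mmarg n b v th1 -> xs th2 <= xs th1.
  move=> th1 th2 t10 t21 t20 t11 hM.
  have [/andP[x10 x1b] d1] := hx th1 (ltac:(apply/andP; split => //)).
  have [/andP[x20 x2b] d2] := hx th2 (ltac:(apply/andP; split => //)).
  rewrite leNgt; apply/negP => lt.
  have := dc_strict _ _ _ _ hc x10 lt x2b.
  rewrite d1 d2 -/b; lra.
split.
- move=> ha.
  have L0 : Lloss n b v <= 0.
    rewrite Lform mulNr oppr_le0; apply: mulr_ge0; first by rewrite invr_ge0 ler0n.
    rewrite big_nat_cond; apply: sumr_ge0 => k /andP[/andP[k1 kn] _].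
    have [->|kn'] := eqVneq k n; first by rewrite Bn !mulr0.
    have kn2 : (k < n)%N by rewrite ltn_neqAle kn' -ltnS.
    have [k2|k2] := leqP (2 * k) n.
      apply: mulr_ge0; first by rewrite subr_ge0 hvd ?k1.
      apply: mulr_ge0; last by apply: Bg; exact: ltnW.
      rewrite subr_ge0 -natrM ler_nat //.
    rewrite (ha k) ?(ha k.+1) ?subrr ?mul0r //; apply/andP; split; lia.
  split => // th1 th2 t10 t12 t21.
  have hM : Mmarg n b v th2 <= Mmarg n b v th1 by rewrite /Mmarg; nra.
  split => //; apply: xsmono hM => //; lra.
- move=> hb.
  have L0 : 0 <= Lloss n b v.
    rewrite Lform mulNr oppr_ge0; apply: mulr_ge0_le0; first by rewrite invr_ge0 ler0n.
    rewrite big_nat_cond; apply: sumr_le0 => k /andP[/andP[k1 kn] _].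
    have [->|kn'] := eqVneq k n; first by rewrite Bn !mulr0.
    have kn2 : (k < n)%N by rewrite ltn_neqAle kn' -ltnS.
    have [k2|k2] := leqP k.+1 (uphalf n).
      rewrite (hb k) ?(hb k.+1) ?subrr ?mul0r //; apply/andP; split; lia.
    apply: mulr_ge0_le0; first by rewrite subr_ge0 hvd ?k1.
    apply: mulr_le0_ge0; last by apply: Bg; exact: ltnW.
    rewrite subr_le0 -natrM ler_nat; lia.
  split => // th1 th2 t10 t12 t21.
  have hM : Mmarg n b v th1 <= Mmarg n b v th2 by rewrite /Mmarg; nra.
  split => //; apply: xsmono hM => //; lra.
Qed.
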